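(* Let $s\in[\tfrac12,1)$. Define $\phi_s:\tilde\Delta\to\tilde\Delta$, using the fundamental parallelogram $P$ with vertices $\pm(-3/2,\sqrt3/2)$, $\pm(1/2,\sqrt3/2)$ to represent points, by \[ \phi_s(x,y)=\begin{cases}(x,y)+(\tfrac12,-\tfrac{\sqrt3}{2}) & \text{if } y\ge 0,\\ (x,y)+(-\tfrac12,\tfrac{\sqrt3}{2}) & \text{if } y<0,\end{cases} \] taken modulo $\Lambda$. Then $\phi_s$ conjugates $\tilde f_s$ to $\tilde f_{1-s}$, i.e. $\phi_s\circ\tilde f_s=\tilde f_{1-s}\circ\phi_s$.
   Context: Let $\Lambda\subset\mathbb{R}^2$ be the lattice generated by $(2,0)$ and $(1,-\sqrt3)$, and let $\tilde\Delta=\mathbb{R}^2/\Lambda$. Subsets of $\mathbb{R}^2$ are regarded as subsets of $\tilde\Delta$ via the projection. Let $A_0$ be the equilateral triangle with vertices $a_1=(-1,0)$, $a_2=(-\tfrac12,\tfrac{\sqrt3}{2})$, $a_3=(0,0)$, and for $n=1,2,3$ let $A_n$ be the reflection of $A_0$ in the line through $a_n$ and $a_{n+1 \bmod 3}$. Let $\iota(x,y)=(-x,-y)$. Let $\omega_0=(1,0)$, $\omega_1=(-\tfrac12,\tfrac{\sqrt3}{2})$, $\omega_2=(-\tfrac12,-\tfrac{\sqrt3}{2})$. For a parameter $u\in(0,1)$ and $i\in\{0,1,2\}$ define $\tilde f_i(x,y)=(x,y)+\sigma_i u\,\omega_i \bmod \Lambda$, where $\sigma_i=1$ if $(x,y)\in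 \bigcup_{\alpha\ne 3-i}A_\alpha\cup\iota(A_{3-i})$ and $\sigma_i=-1$ otherwise; the tetrahedral PET is $\tilde f_u=\tilde f_2\circ\tilde f_1\circ\tilde f_0$. It is a piecewise translation, undefined on the boundaries of the pieces where it is discontinuous; the conjugacy identity is understood where both sides are defined. *)

(* Defs.v *)
From Stdlib Require Import Reals Lra ZArith ClassicalDescription.
Open Scope R_scope.

Definition pt := (R * R)%type.
Definition padd (p q : pt) : pt := (fst p + fst q, snd p + snd q).
Definition psub (p q : pt) : pt := (fst p - fst q, snd p - snd q).
Definition pscale (c : R) (p : pt) : pt := (c * fst p, c * snd p).
Definition pdot (p q : pt) : R := fst p * fst q + snd p * snd q.
Definition pdist (p q : pt) : R := sqrt (pdot (psub p q) (psub p q)).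

Definition inLambda (v : pt) : Prop :=
  exists m n : Z, v = padd (pscale (IZR m) (2, 0)) (pscale (IZR n) (1, - sqrt 3)).

(* Congruence modulo Lambda: equality in the torus R^2 / Lambda. *)
Definition cong (p q : pt) : Prop := inLambda (psub p q).

Definition in_tri (a b c p : pt) : Prop :=
  exists l1 l2 l3 : R, 0 <= l1 /\ 0 <= l2 /\ 0 <= l3 /\ l1 + l2 + l3 = 1 /\
    p = padd (pscale l1 a) (padd (pscale l2 b) (pscale l3 c)).

Definition reflect (a b p : pt) : pt :=
  let d := psub b a in
  let proj := padd a (pscale (pdot (psub p a) d / pdot d d) d) in
  psub (pscale 2 proj) p.

Definition avert (n : nat) : pt :=
  match n with
  | 1%nat => (-1, 0)
  | 2%nat => (-(1/2), sqrt 3 / 2)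
  | _ => (0, 0)
  end.

Definition nextidx (n : nat) : nat :=
  match n with 1%nat => 2%nat | 2%nat => 3%nat | _ => 1%nat end.

Definition A0 (p : pt) : Prop := in_tri (avert 1) (avert 2) (avert 3) p.

(* A_n = reflection of A_0 in the line through a_n and a_{n+1 mod 3};
   since a reflection is an involution, p is in the image iff its
   reflection is in A_0. *)
Definition A (n : nat) (p : pt) : Prop :=
  match n with
  | 0%nat => A0 p
  | _ => A0 (reflect (avert n) (avert (nextidx n)) p)
  end.

Definition iota_set (X : pt -> Prop) (p : pt) : Prop := X (pscale (-1) p).

Definition omega (i : nat) : pt :=
  match i with
  | 0%nat => (1, 0)
  | 1%nat => (-(1/2), sqrt 3 / 2)
  | _ => (-(1/2), - (sqrt 3 / 2))
  end.

Definition Splus (i : nat) (p : pt) : Prop :=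
  exists p', cong p p' /\
    ((exists alpha : nat, (alpha <= 3)%nat /\ alpha <> (3 - i)%nat /\ A alpha p')
     \/ iota_set (A (3 - i)) p').

Definition sigma (i : nat) (p : pt) : R :=
  if excluded_middle_informative (Splus i p) then 1 else -1.

Definition ftilde (i : nat) (u : R) (p : pt) : pt :=
  padd p (pscale (sigma i p * u) (omega i)).

Definition PET (u : R) (p : pt) : pt :=
  ftilde 2 u (ftilde 1 u (ftilde 0 u p)).

(* f_i is defined at p iff it is continuous there, i.e. the sign sigma_i is
   locally constant around p. *)
Definition fdefined (i : nat) (p : pt) : Prop :=
  exists eps, 0 < eps /\ forall q, pdist p q < eps -> (Splus i q <-> Splus i p).

Definition PET_defined (u : R) (p : pt) : Prop :=
  fdefined 0 p /\ fdefined 1 (ftilde 0 u p) /\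
  fdefined 2 (ftilde 1 u (ftilde 0 u p)).

(* Closed fundamental parallelogram P with vertices
   +-(-3/2, sqrt3/2), +-(1/2, sqrt3/2), i.e. {a(2,0)+b(1,-sqrt3) : |a|,|b| <= 1/2}. *)
Definition inP (q : pt) : Prop :=
  exists a b : R, -(1/2) <= a <= 1/2 /\ -(1/2) <= b <= 1/2 /\
    q = padd (pscale a (2, 0)) (pscale b (1, - sqrt 3)).

Definition phi_on_P (q : pt) : pt :=
  if Rle_dec 0 (snd q) then padd q (1/2, - (sqrt 3 / 2))
  else padd q (-(1/2), sqrt 3 / 2).

(* Main.v *)
Require Import Defs.
From Stdlib Require Import Reals Lra Lia ZArith ClassicalDescription.
Open Scope R_scope.

Ltac hsimp :=
  let H2 := fresh in let H3 := fresh in let H4 := fresh in let h := fresh "h" in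
  assert (H2 : sqrt 3 ^ 2 = 3) by (simpl; rewrite Rmult_1_r; apply sqrt_sqrt; lra);
  set (h := sqrt 3) in *; clearbody h;
  assert (H3 : h ^ 3 = 3 * h) by (rewrite <- H2; ring);
  assert (H4 : h ^ 4 = 9) by (replace 9 with (3*3) by ring; rewrite <- H2; ring);
  field_simplify; try (repeat (rewrite H2 || rewrite H3 || rewrite H4)); try field; try lra.

Definition ca (p : pt) : R := fst p - snd p * sqrt 3 / 3.
Definition cb (p : pt) : R := 2 * snd p * sqrt 3 / 3.
Definition mk (a b : R) : pt := (a + b / 2, b * sqrt 3 / 2).

Lemma ca_mk a b : ca (mk a b) = a.
Proof. unfold ca, mk; simpl. hsimp. Qed.
Lemma cb_mk a b : cb (mk a b) = b.
Proof. unfold cb, mk; simpl. hsimp. Qed.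
Lemma eta p : p = mk (ca p) (cb p).
Proof. destruct p as [x y]; unfold mk, ca, cb; simpl; f_equal; hsimp. Qed.
Lemma pt_ext p q : ca p = ca q -> cb p = cb q -> p = q.
Proof. intros H1 H2. transitivity (mk (ca p) (cb p)). apply eta.
  rewrite H1, H2; symmetry; apply eta. Qed.

Lemma ca_padd p q : ca (padd p q) = ca p + ca q.
Proof. unfold ca, padd; simpl; field. Qed.
Lemma cb_padd p q : cb (padd p q) = cb p + cb q.
Proof. unfold cb, padd; simpl; field. Qed.
Lemma ca_psub p q : ca (psub p q) = ca p - ca q.
Proof. unfold ca, psub; simpl; field. Qed.
Lemma cb_psub p q : cb (psub p q) = cb p - cb q.
Proof. unfold cb, psub; simpl; field. Qed.
Lemma ca_pscale k p : ca (pscale k p) = k * ca p.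
Proof. unfold ca, pscale; simpl; field. Qed.
Lemma cb_pscale k p : cb (pscale k p) = k * cb p.
Proof. unfold cb, pscale; simpl; field. Qed.

Definition Rel (y x : pt) (al be : R) : Prop :=
  exists M N : Z, ca y - ca x = al + 2 * IZR M /\ cb y - cb x = be + 2 * IZR N.

Lemma inLambda_iff v : inLambda v <-> exists M N : Z, ca v = 2 * IZR M /\ cb v = 2 * IZR N.
Proof.
  split.
  - intros [m [n Hv]]. exists (m + n)%Z, (- n)%Z. subst v.
    rewrite plus_IZR, opp_IZR. unfold ca, cb, padd, pscale; simpl; split; hsimp.
  - intros [M [N [H1 H2]]]. exists (M + N)%Z, (- N)%Z.
    apply pt_ext; [rewrite H1|rewrite H2]; rewrite ?ca_padd, ?cb_padd, ?ca_pscale, ?cb_pscale, plus_IZR, opp_IZR;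
    unfold ca, cb; simpl; hsimp.
Qed.

Lemma cong_iff p q : cong p q <-> Rel p q 0 0.
Proof.
  unfold cong, Rel. rewrite inLambda_iff, ca_psub, cb_psub.
  split; intros [M [N [H1 H2]]]; exists M, N; lra.
Qed.

Lemma ca_av1 : ca (avert 1) = -1. Proof. unfold ca; simpl; field. Qed.
Lemma cb_av1 : cb (avert 1) = 0. Proof. unfold cb; simpl; field. Qed.
Lemma ca_av2 : ca (avert 2) = -1. Proof. unfold ca; simpl; hsimp. Qed.
Lemma cb_av2 : cb (avert 2) = 1. Proof. unfold cb; simpl; hsimp. Qed.
Lemma ca_av3 : ca (avert 3) = 0. Proof. unfold ca; simpl; field. Qed.
Lemma cb_av3 : cb (avert 3) = 0. Proof. unfold cb; simpl; field. Qed.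

Lemma A0_iff p : A 0 p <-> -1 <= ca p /\ 0 <= cb p /\ ca p + cb p <= 0.
Proof.
  simpl. unfold A0, in_tri. split.
  - intros [l1 [l2 [l3 [H1 [H2 [H3 [H4 Hp]]]]]]]. subst p.
    rewrite !ca_padd, !cb_padd, !ca_pscale, !cb_pscale, ca_av1, cb_av1, ca_av2, cb_av2, ca_av3, cb_av3.
    lra.
  - intros [H1 [H2 H3]]. exists (-(ca p + cb p)), (cb p), (ca p + 1).
    repeat split; try lra.
    apply pt_ext; rewrite ?ca_padd, ?cb_padd, ?ca_pscale, ?cb_pscale, ?ca_av1, ?cb_av1, ?ca_av2, ?cb_av2, ?ca_av3, ?cb_av3; lra.
Qed.

Lemma reflect_unit a b p : pdot (psub b a) (psub b a) = 1 ->
  reflect a b p = psub (pscale 2 (padd a (pscale (pdot (psub p a) (psub b a)) (psub b a)))) p.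
Proof. intros H. unfold reflect. cbv zeta. rewrite H. unfold Rdiv. rewrite Rinv_1, Rmult_1_r. reflexivity. Qed.

Lemma refl1 p : ca (reflect (avert 1) (avert 2) p) = - ca p - 2 /\
                cb (reflect (avert 1) (avert 2) p) = ca p + cb p + 1.
Proof.
  rewrite reflect_unit by (unfold pdot, psub; simpl; hsimp).
  destruct p as [x y]. unfold ca, cb, pdot, psub, padd, pscale; simpl; split; hsimp.
Qed.
Lemma refl2 p : ca (reflect (avert 2) (avert 3) p) = - cb p /\
                cb (reflect (avert 2) (avert 3) p) = - ca p.
Proof.
  rewrite reflect_unit by (unfold pdot, psub; simpl; hsimp).
  destruct p as [x y]. unfold ca, cb, pdot, psub, padd, pscale; simpl; split; hsimp.
Qed.
Lemma refl3 p : ca (reflect (avert 3) (avert 1) p) = ca p + cb p /\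
                cb (reflect (avert 3) (avert 1) p) = - cb p.
Proof.
  rewrite reflect_unit by (unfold pdot, psub; simpl; hsimp).
  destruct p as [x y]. unfold ca, cb, pdot, psub, padd, pscale; simpl; split; hsimp.
Qed.

Lemma A1_iff p : A 1 p <-> ca p <= -1 /\ cb p <= 1 /\ -1 <= ca p + cb p.
Proof.
  assert (E : A 1 p = A 0 (reflect (avert 1) (avert 2) p)) by reflexivity; rewrite E.
  rewrite A0_iff. destruct (refl1 p) as [E1 E2]. rewrite E1, E2. lra.
Qed.
Lemma A2_iff p : A 2 p <-> ca p <= 0 /\ cb p <= 1 /\ 0 <= ca p + cb p.
Proof.
  assert (E : A 2 p = A 0 (reflect (avert 2) (avert 3) p)) by reflexivity; rewrite E.
  rewrite A0_iff. destruct (refl2 p) as [E1 E2]. rewrite E1, E2. lra.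
Qed.
Lemma A3_iff p : A 3 p <-> ca p <= 0 /\ cb p <= 0 /\ -1 <= ca p + cb p.
Proof.
  assert (E : A 3 p = A 0 (reflect (avert 3) (avert 1) p)) by reflexivity; rewrite E.
  rewrite A0_iff. destruct (refl3 p) as [E1 E2]. rewrite E1, E2. lra.
Qed.

Definition C (g : R) : Prop := exists k : Z, 2 * IZR k <= g <= 2 * IZR k + 1.

Lemma floor_ex x : exists m : Z, IZR m <= x < IZR m + 1.
Proof. exists (Int_part x). pose proof (base_Int_part x). lra. Qed.

Lemma cong_mk z a b (M N : Z) : ca z - a = 2 * IZR M -> cb z - b = 2 * IZR N -> cong z (mk a b).
Proof. intros H1 H2. apply cong_iff. exists M, N. rewrite ca_mk, cb_mk. lra. Qed.

Lemma Splus_introA i al z p' : (al <= 3)%nat -> al <> (3 - i)%nat -> A al p' -> cong z p' -> Splus i z.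
Proof. intros. exists p'. split; auto. left. exists al. auto. Qed.
Lemma Splus_introI i z p' : A (3 - i)%nat (pscale (-1) p') -> cong z p' -> Splus i z.
Proof. intros. exists p'. split; auto. Qed.

Lemma Splus0_iff z : Splus 0 z <-> C (cb z).
Proof.
  split.
  - intros [p' [Hc H]]. apply cong_iff in Hc. destruct Hc as [M [N [Ha Hb]]].
    exists N.
    destruct H as [[al [Hal [Hne HA]]] | HI].
    + destruct al as [|[|[|al]]]; [rewrite A0_iff in HA | rewrite A1_iff in HA | rewrite A2_iff in HA | simpl in Hne; lia]; lra.
    + change (A 3 (pscale (-1) p')) in HI. rewrite A3_iff, ca_pscale, cb_pscale in HI. lra.
  - intros [k Hk]. destruct (floor_ex (ca z / 2)) as [m Hm].
    set (a' := ca z - 2 * IZR m). set (b' := cb z - 2 * IZR k).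
    assert (Ha : 0 <= a' < 2) by (unfold a'; lra).
    assert (Hb : 0 <= b' <= 1) by (unfold b'; lra).
    destruct (Rle_lt_dec a' 1) as [H1|H1]; destruct (Rle_lt_dec (a' + b') 1) as [H2|H2].
    + apply (Splus_introI 0 z (mk a' b')).
      * change (A 3 (pscale (-1) (mk a' b'))). rewrite A3_iff, ca_pscale, cb_pscale, ca_mk, cb_mk. lra.
      * apply (cong_mk _ _ _ m k); unfold a', b'; lra.
    + apply (Splus_introA 0 1 z (mk (a' - 2) b')); [lia|simpl; lia| |].
      * rewrite A1_iff, ca_mk, cb_mk. lra.
      * apply (cong_mk _ _ _ (m + 1) k); rewrite ?plus_IZR; unfold a', b'; simpl; lra.
    + lra.
    + destruct (Rle_lt_dec (a' + b') 2) as [H3|H3].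
      * apply (Splus_introA 0 0 z (mk (a' - 2) b')); [lia|simpl; lia| |].
        -- rewrite A0_iff, ca_mk, cb_mk. lra.
        -- apply (cong_mk _ _ _ (m + 1) k); rewrite ?plus_IZR; unfold a', b'; simpl; lra.
      * apply (Splus_introA 0 2 z (mk (a' - 2) b')); [lia|simpl; lia| |].
        -- rewrite A2_iff, ca_mk, cb_mk. lra.
        -- apply (cong_mk _ _ _ (m + 1) k); rewrite ?plus_IZR; unfold a', b'; simpl; lra.
Qed.

Lemma Splus1_iff z : Splus 1 z <-> C (ca z + cb z - 1).
Proof.
  split.
  - intros [p' [Hc H]]. apply cong_iff in Hc. destruct Hc as [M [N [Ha Hb]]].
    exists (M + N - 1)%Z. rewrite minus_IZR, plus_IZR. simpl.
    destruct H as [[al [Hal [Hne HA]]] | HI].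
    + destruct al as [|[|[|[|al]]]]; [rewrite A0_iff in HA | rewrite A1_iff in HA | simpl in Hne; lia | rewrite A3_iff in HA | lia]; lra.
    + change (A 2 (pscale (-1) p')) in HI. rewrite A2_iff, ca_pscale, cb_pscale in HI. lra.
  - intros [k Hk]. destruct (floor_ex (cb z / 2)) as [m Hm].
    set (b' := cb z - 2 * IZR m). set (a' := ca z - 2 * (IZR k + 1) + 2 * IZR m).
    assert (Hb : 0 <= b' < 2) by (unfold b'; lra).
    assert (Hs : -1 <= a' + b' <= 0) by (unfold a', b'; lra).
    destruct (Rle_lt_dec b' 1) as [H1|H1].
    + destruct (Rle_lt_dec (-1) a') as [H2|H2].
      * apply (Splus_introA 1 0 z (mk a' b')); [lia|simpl; lia| |].
        -- rewrite A0_iff, ca_mk, cb_mk. lra.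
        -- apply (cong_mk _ _ _ (k + 1 - m) m); rewrite ?minus_IZR, ?plus_IZR; unfold a', b'; simpl; lra.
      * apply (Splus_introA 1 1 z (mk a' b')); [lia|simpl; lia| |].
        -- rewrite A1_iff, ca_mk, cb_mk. lra.
        -- apply (cong_mk _ _ _ (k + 1 - m) m); rewrite ?minus_IZR, ?plus_IZR; unfold a', b'; simpl; lra.
    + destruct (Rle_lt_dec (a' + 2) 0) as [H2|H2].
      * apply (Splus_introA 1 3 z (mk (a' + 2) (b' - 2))); [lia|simpl; lia| |].
        -- rewrite A3_iff, ca_mk, cb_mk. lra.
        -- apply (cong_mk _ _ _ (k - m) (m + 1)); rewrite ?minus_IZR, ?plus_IZR; unfold a', b'; simpl; lra.
      * apply (Splus_introI 1 z (mk (a' + 2) (b' - 2))).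
        -- change (A 2 (pscale (-1) (mk (a' + 2) (b' - 2)))). rewrite A2_iff, ca_pscale, cb_pscale, ca_mk, cb_mk. lra.
        -- apply (cong_mk _ _ _ (k - m) (m + 1)); rewrite ?minus_IZR, ?plus_IZR; unfold a', b'; simpl; lra.
Qed.

Lemma Splus2_iff z : Splus 2 z <-> C (ca z - 1).
Proof.
  split.
  - intros [p' [Hc H]]. apply cong_iff in Hc. destruct Hc as [M [N [Ha Hb]]].
    destruct H as [[al [Hal [Hne HA]]] | HI].
    + exists (M - 1)%Z. rewrite minus_IZR. simpl.
      destruct al as [|[|[|[|al]]]]; [rewrite A0_iff in HA | simpl in Hne; lia | rewrite A2_iff in HA | rewrite A3_iff in HA | lia]; lra.
    + exists M. change (A 1 (pscale (-1) p')) in HI. rewrite A1_iff, ca_pscale, cb_pscale in HI. lra.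
  - intros [k Hk]. destruct (floor_ex (cb z / 2)) as [m Hm].
    set (b' := cb z - 2 * IZR m). set (a' := ca z - 2 * (IZR k + 1)).
    assert (Hb : 0 <= b' < 2) by (unfold b'; lra).
    assert (Hs : -1 <= a' <= 0) by (unfold a'; lra).
    destruct (Rle_lt_dec b' 1) as [H1|H1].
    + destruct (Rle_lt_dec (a' + b') 0) as [H2|H2].
      * apply (Splus_introA 2 0 z (mk a' b')); [lia|simpl; lia| |].
        -- rewrite A0_iff, ca_mk, cb_mk. lra.
        -- apply (cong_mk _ _ _ (k + 1) m); rewrite ?minus_IZR, ?plus_IZR; unfold a', b'; simpl; lra.
      * apply (Splus_introA 2 2 z (mk a' b')); [lia|simpl; lia| |].
        -- rewrite A2_iff, ca_mk, cb_mk. lra.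
        -- apply (cong_mk _ _ _ (k + 1) m); rewrite ?minus_IZR, ?plus_IZR; unfold a', b'; simpl; lra.
    + destruct (Rle_lt_dec (-1) (a' + b' - 2)) as [H2|H2].
      * apply (Splus_introA 2 3 z (mk a' (b' - 2))); [lia|simpl; lia| |].
        -- rewrite A3_iff, ca_mk, cb_mk. lra.
        -- apply (cong_mk _ _ _ (k + 1) (m + 1)); rewrite ?minus_IZR, ?plus_IZR; unfold a', b'; simpl; lra.
      * apply (Splus_introI 2 z (mk (a' + 2) (b' - 2))).
        -- change (A 1 (pscale (-1) (mk (a' + 2) (b' - 2)))). rewrite A1_iff, ca_pscale, cb_pscale, ca_mk, cb_mk. lra.
        -- apply (cong_mk _ _ _ k (m + 1)); rewrite ?minus_IZR, ?plus_IZR; unfold a', b'; simpl; lra.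
Qed.

Lemma C_even g f : IZR f < g < IZR f + 1 -> (C g <-> Z.even f = true).
Proof.
  intros Hf. split.
  - intros [k Hk].
    assert (H1 : (f < 2 * k + 1)%Z) by (apply lt_IZR; rewrite plus_IZR, mult_IZR; simpl; lra).
    assert (H2 : (2 * k < f + 1)%Z) by (apply lt_IZR; rewrite plus_IZR, mult_IZR; simpl; lra).
    assert (f = 2 * k)%Z by lia. subst f. rewrite Z.even_mul. reflexivity.
  - intros He. apply Z.even_spec in He. destruct He as [k Hk]. subst f.
    exists k. rewrite mult_IZR in Hf. simpl in Hf. lra.
Qed.

Lemma C_shift g n : C (g + 2 * IZR n) <-> C g.
Proof.
  split; intros [k Hk].
  - exists (k - n)%Z. rewrite minus_IZR. lra.
  - exists (k + n)%Z. rewrite plus_IZR. lra.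
Qed.

Lemma C_flip g : (forall n : Z, g <> IZR n) -> (C (g + 1) <-> ~ C g).
Proof.
  intros Hn. destruct (floor_ex g) as [f Hf].
  assert (Hlt : IZR f < g) by (destruct Hf as [Hf1 Hf2]; destruct Hf1 as [Hf1|Hf1]; [exact Hf1| exfalso; apply (Hn f); auto]).
  rewrite (C_even g f) by lra.
  rewrite (C_even (g + 1) (f + 1)) by (rewrite plus_IZR; simpl; lra).
  rewrite Z.even_add. simpl. destruct (Z.even f); simpl; split; intros; try discriminate; try tauto.
Qed.

Lemma nonint_lemma g0 d : 0 < d -> (forall t, -d < t < d -> (C (g0 + t) <-> C g0)) ->
  forall n : Z, g0 <> IZR n.
Proof.
  intros Hd H n E. subst g0.
  set (t := Rmin (d / 2) (1 / 2)).
  assert (Ht1 : 0 < t) by (unfold t; apply Rmin_pos; lra).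
  assert (Ht2 : t <= d / 2) by (unfold t; apply Rmin_l).
  assert (Ht3 : t <= 1 / 2) by (unfold t; apply Rmin_r).
  pose proof (H t ltac:(lra)) as Hp. pose proof (H (- t) ltac:(lra)) as Hm.
  rewrite (C_even _ n) in Hp by lra.
  rewrite (C_even _ (n - 1)) in Hm by (rewrite minus_IZR; simpl; lra).
  rewrite Z.even_sub in Hm. simpl in Hm.
  destruct (Z.even n); simpl in *; tauto || (destruct Hp, Hm; intuition discriminate).
Qed.

Lemma pdist_lemma z t d : pdot d d = 1 -> pdist z (padd z (pscale t d)) = Rabs t.
Proof.
  intros H. unfold pdist. rewrite <- sqrt_Rsqr_abs. f_equal.
  destruct z as [x y], d as [d1 d2]. unfold pdot, psub, padd, pscale, Rsqr in *; simpl in *.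
  transitivity (t * t * (d1 * d1 + d2 * d2)); [ring | rewrite H; ring].
Qed.

Lemma ca_e1 : ca (1, 0) = 1. Proof. unfold ca; simpl; field. Qed.
Lemma cb_e1 : cb (1, 0) = 0. Proof. unfold cb; simpl; field. Qed.
Lemma pdot_e1 : pdot (1, 0) (1, 0) = 1. Proof. unfold pdot; simpl; ring. Qed.
Lemma pdot_e2 : pdot (mk 0 1) (mk 0 1) = 1. Proof. unfold pdot, mk; simpl; hsimp. Qed.

Lemma fdef0 z : fdefined 0 z -> forall n : Z, cb z <> IZR n.
Proof.
  intros [eps [He Hf]]. apply (nonint_lemma _ eps He). intros t Ht.
  specialize (Hf (padd z (pscale t (mk 0 1)))). rewrite pdist_lemma in Hf by exact pdot_e2.
  rewrite !Splus0_iff, cb_padd, cb_pscale, cb_mk in Hf. rewrite Rmult_1_r in Hf.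
  apply Hf. apply Rabs_def1; lra.
Qed.
Lemma fdef1 z : fdefined 1 z -> forall n : Z, ca z + cb z - 1 <> IZR n.
Proof.
  intros [eps [He Hf]]. apply (nonint_lemma _ eps He). intros t Ht.
  specialize (Hf (padd z (pscale t (1, 0)))). rewrite pdist_lemma in Hf by exact pdot_e1.
  rewrite !Splus1_iff, ca_padd, ca_pscale, cb_padd, cb_pscale, ca_e1, cb_e1 in Hf.
  replace (ca z + cb z - 1 + t) with (ca z + t * 1 + (cb z + t * 0) - 1) by ring.
  apply Hf. apply Rabs_def1; lra.
Qed.
Lemma fdef2 z : fdefined 2 z -> forall n : Z, ca z - 1 <> IZR n.
Proof.
  intros [eps [He Hf]]. apply (nonint_lemma _ eps He). intros t Ht.
  specialize (Hf (padd z (pscale t (1, 0)))). rewrite pdist_lemma in Hf by exact pdot_e1.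
  rewrite !Splus2_iff, ca_padd, ca_pscale, ca_e1 in Hf.
  replace (ca z - 1 + t) with (ca z + t * 1 - 1) by ring.
  apply Hf. apply Rabs_def1; lra.
Qed.

Lemma sigma_gen i x y (g : pt -> R) : (forall z, Splus i z <-> C (g z)) ->
  (forall n : Z, g x <> IZR n) -> (exists n : Z, g y = g x + 1 + 2 * IZR n) ->
  Defs.sigma i y = - Defs.sigma i x.
Proof.
  intros HS Hn [n Hy]. pose proof (C_flip _ Hn) as Hf.
  assert (Hc : Splus i y <-> ~ Splus i x).
  { rewrite !HS, Hy, C_shift. exact Hf. }
  unfold Defs.sigma. destruct (excluded_middle_informative (Splus i y));
  destruct (excluded_middle_informative (Splus i x)); tauto || lra.
Qed.

Lemma sigma_pm i p : Defs.sigma i p = 1 \/ Defs.sigma i p = -1.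
Proof. unfold Defs.sigma. destruct (excluded_middle_informative (Splus i p)); auto. Qed.

Lemma ca_ft i u p : ca (ftilde i u p) = ca p + Defs.sigma i p * u * ca (omega i).
Proof. unfold ftilde. rewrite ca_padd, ca_pscale. reflexivity. Qed.
Lemma cb_ft i u p : cb (ftilde i u p) = cb p + Defs.sigma i p * u * cb (omega i).
Proof. unfold ftilde. rewrite cb_padd, cb_pscale. reflexivity. Qed.
Lemma ca_om0 : ca (omega 0) = 1. Proof. unfold ca; simpl; field. Qed.
Lemma cb_om0 : cb (omega 0) = 0. Proof. unfold cb; simpl; field. Qed.
Lemma ca_om1 : ca (omega 1) = -1. Proof. unfold ca; simpl; hsimp. Qed.
Lemma cb_om1 : cb (omega 1) = 1. Proof. unfold cb; simpl; hsimp. Qed.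
Lemma ca_om2 : ca (omega 2) = 0. Proof. unfold ca; simpl; hsimp. Qed.
Lemma cb_om2 : cb (omega 2) = -1. Proof. unfold cb; simpl; hsimp. Qed.

Lemma Rel_trans a b c al be al' be' : Rel a b al be -> Rel b c al' be' -> Rel a c (al + al') (be + be').
Proof.
  intros [M [N [H1 H2]]] [M' [N' [H3 H4]]]. exists (M + M')%Z, (N + N')%Z.
  rewrite !plus_IZR. lra.
Qed.
Lemma Rel_sym a b al be : Rel a b al be -> Rel b a (- al) (- be).
Proof.
  intros [M [N [H1 H2]]]. exists (- M)%Z, (- N)%Z. rewrite !opp_IZR. lra.
Qed.
Lemma Rel_eq a b al be al' be' : Rel a b al be -> al = al' -> be = be' -> Rel a b al' be'.
Proof. intros H -> ->. exact H. Qed.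

Lemma step0 s x y : Rel y x 1 (-1) -> fdefined 0 x ->
  Rel (ftilde 0 (1 - s) y) (ftilde 0 s x) 0 1.
Proof.
  intros [M [N [H1 H2]]] Hd.
  assert (Hs : Defs.sigma 0 y = - Defs.sigma 0 x).
  { apply (sigma_gen 0 x y cb); [exact Splus0_iff | exact (fdef0 _ Hd) |].
    exists (N - 1)%Z. rewrite minus_IZR. simpl. lra. }
  unfold Rel. rewrite !ca_ft, !cb_ft, Hs, ca_om0, cb_om0.
  destruct (sigma_pm 0 x) as [E|E]; rewrite E.
  - exists M, (N - 1)%Z. rewrite minus_IZR. simpl. lra.
  - exists (M + 1)%Z, (N - 1)%Z. rewrite minus_IZR, plus_IZR. simpl. lra.
Qed.

Lemma step1 s x y : Rel y x 0 1 -> fdefined 1 x ->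
  Rel (ftilde 1 (1 - s) y) (ftilde 1 s x) 1 0.
Proof.
  intros [M [N [H1 H2]]] Hd.
  assert (Hs : Defs.sigma 1 y = - Defs.sigma 1 x).
  { apply (sigma_gen 1 x y (fun z => ca z + cb z - 1)); [exact Splus1_iff | exact (fdef1 _ Hd) |].
    exists (M + N)%Z. rewrite plus_IZR. lra. }
  unfold Rel. rewrite !ca_ft, !cb_ft, Hs, ca_om1, cb_om1.
  destruct (sigma_pm 1 x) as [E|E]; rewrite E.
  - exists M, N. lra.
  - exists (M - 1)%Z, (N + 1)%Z. rewrite minus_IZR, plus_IZR. simpl. lra.
Qed.

Lemma step2 s x y : Rel y x 1 0 -> fdefined 2 x ->
  Rel (ftilde 2 (1 - s) y) (ftilde 2 s x) 1 (-1).
Proof.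
  intros [M [N [H1 H2]]] Hd.
  assert (Hs : Defs.sigma 2 y = - Defs.sigma 2 x).
  { apply (sigma_gen 2 x y (fun z => ca z - 1)); [exact Splus2_iff | exact (fdef2 _ Hd) |].
    exists M. lra. }
  unfold Rel. rewrite !ca_ft, !cb_ft, Hs, ca_om2, cb_om2.
  destruct (sigma_pm 2 x) as [E|E]; rewrite E.
  - exists M, (N + 1)%Z. rewrite plus_IZR. simpl. lra.
  - exists M, N. lra.
Qed.

Lemma phi_rel q : Rel (phi_on_P q) q 1 (-1).
Proof.
  unfold phi_on_P. destruct (Rle_dec 0 (snd q)).
  - exists 0%Z, 0%Z. rewrite ca_padd, cb_padd. unfold ca at 2, cb at 2. simpl. split; hsimp.
  - exists (-1)%Z, 1%Z. rewrite ca_padd, cb_padd. unfold ca at 2, cb at 2. simpl. split; hsimp.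
Qed.

Theorem theorem2p2 :
  forall s : R, 1/2 <= s < 1 ->
  forall p q r : pt,
    inP q -> cong p q ->
    inP r -> cong (PET s p) r ->
    PET_defined s p ->
    PET_defined (1 - s) (phi_on_P q) ->
    cong (phi_on_P r) (PET (1 - s) (phi_on_P q)).
Proof.
  intros s Hs p q r _ Hpq _ Hr [D0 [D1 D2]] _.
  apply cong_iff in Hpq. apply cong_iff in Hr. apply cong_iff.
  assert (R0 : Rel (phi_on_P q) p 1 (-1)).
  { eapply Rel_eq. eapply Rel_trans. apply phi_rel. apply Rel_sym. exact Hpq. lra. lra. }
  pose proof (step0 s _ _ R0 D0) as R1.
  pose proof (step1 s _ _ R1 D1) as R2.
  pose proof (step2 s _ _ R2 D2) as R3.
  unfold PET. fold (PET s p) in R3.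
  eapply Rel_eq.
  eapply Rel_trans. apply phi_rel.
  eapply Rel_trans. apply Rel_sym. exact Hr.
  apply Rel_sym. exact R3.
  lra. lra.
Qed.
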